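(* Let $\chi$ be a kernel satisfying $(\chi_2)$ with $\eta>0$ and $m_5(\chi)<\infty$. Then for every $f\in\mathcal{UB}^{\bar\omega}_+(\mathbb{R}_+)$ and every $w\ge1$, $$\|MG^{\chi}_w f-f\|_{\bar\omega}\le \frac{64\,\Omega(f,1/w)}{\eta}\big[m_0(\chi)+m_5(\chi)\big];$$ equivalently, for all $x>0$, $|MG^{\chi}_w(f,x)-f(x)|\le \frac{64(1+\log^2x)\Omega(f,1/w)}{\eta}[m_0(\chi)+m_5(\chi)]$.
   Context: $\mathbb{R}_+$ denotes the positive reals; $\bigvee_{k\in\Lambda}T_k=\sup\{T_k:k\in\Lambda\}$. A kernel is a bounded measurable $\chi:\mathbb{R}_+\to\mathbb{R}$. Moments: $m_{\nu}(\chi)=\sup_{u>0}\bigvee_{k\in\mathbb{Z}}|\chi(e^{-k}u)||k-\log u|^{\nu}$. Condition $(\chi_2)$: $\eta:=\inf_{x\in[1,e]}\chi(x)$ exists. Weight $\bar\omega(x)=\frac1{1+\log^2x}$, $\|f\|_{\bar\omega}=\sup_{x>0}\bar\omega(x)|f(x)|$. $\mathcal{UB}^{\bar\omega}_+(\mathbb{R}_+)$: nonnegative $f$ such that $\bar\omega f$ is bounded and log-uniformly continuous (for every $\epsilon>0$ there is $\delta>0$ with $|g(x)-g(y)|<\epsilon$ whenever $|\log x-\log y|\le\delta$). Weighted logarithmic modulus of continuity: $\Omega(f,\delta)=\sup_{|\log t|\le\delta,\ x>0}\frac{|f(tx)-f(x)|}{(1+\log^2x)(1+\log^2t)}$. Operator: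 $MG^{\chi}_w(f,x)=\frac{\bigvee_{k\in\mathbb{Z}}\chi(e^{-k}x^{w})f(e^{k/w})}{\bigvee_{k\in\mathbb{Z}}\chi(e^{-k}x^{w})}$. *)

(* Defs.v *)
From HB Require Import structures.
From mathcomp Require Import all_boot all_order all_algebra.
From mathcomp Require Import all_classical all_reals all_analysis.
Set Implicit Arguments. Unset Strict Implicit. Unset Printing Implicit Defensive.
Import Order.TTheory GRing.Theory Num.Theory.
Local Open Scope classical_set_scope.
Local Open Scope ring_scope.

Section Defs.
Variable R : realType.

Definition is_kernel (chi : R -> R) : Prop :=
  measurable_fun (`]0, +oo[%classic : set R) chi /\
  exists M : R, forall x : R, 0 < x -> `|chi x| <= M.

Definition moment (chi : R -> R) (nu : nat) : \bar R :=
  ereal_sup [set y : \bar R | exists (u : R) (k : int), 0 < u /\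
     y = (`|chi (expR (- k%:~R) * u)| * `|k%:~R - ln u| ^+ nu)%:E].

Definition eta_of (chi : R -> R) : R :=
  inf [set y : R | exists x : R, 1 <= x <= expR 1 /\ y = chi x].

Definition omega_bar (x : R) : R := 1 / (1 + ln x ^+ 2).

Definition wnorm (g : R -> R) : \bar R :=
  ereal_sup [set y : \bar R | exists x : R, 0 < x /\ y = (omega_bar x * `|g x|)%:E].

Definition log_unif_cont (g : R -> R) : Prop :=
  forall eps : R, 0 < eps -> exists delta : R, 0 < delta /\
    forall x y : R, 0 < x -> 0 < y -> `|ln x - ln y| <= delta -> `|g x - g y| < eps.

Definition UBplus (f : R -> R) : Prop :=
  (forall x : R, 0 < x -> 0 <= f x) /\
  (exists M : R, forall x : R, 0 < x -> `|omega_bar x * f x| <= M) /\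
  log_unif_cont (fun x => omega_bar x * f x).

Definition Omega (f : R -> R) (delta : R) : \bar R :=
  ereal_sup [set y : \bar R | exists t x : R, 0 < t /\ `|ln t| <= delta /\ 0 < x /\
     y = (`|f (t * x) - f x| / ((1 + ln x ^+ 2) * (1 + ln t ^+ 2)))%:E].

Definition MG (chi : R -> R) (w : R) (f : R -> R) (x : R) : R :=
  sup [set y : R | exists k : int, y = chi (expR (- k%:~R) * (x `^ w)) * f (expR (k%:~R / w))]
  / sup [set y : R | exists k : int, y = chi (expR (- k%:~R) * (x `^ w))].

End Defs.

(* Main.v *)
Require Import Defs.
From HB Require Import structures.
From mathcomp Require Import all_boot all_order all_algebra.
From mathcomp Require Import all_classical all_reals all_analysis.
From mathcomp Require Import ring lra.
Import Order.TTheory GRing.Theory Num.Theory.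
Local Open Scope classical_set_scope.
Local Open Scope ring_scope.
Lemma dpow_le (R : realType) (d : R) : 0 <= d -> (1 + d) * (1 + d ^+ 2) <= 4 * (1 + d ^+ 5).
Proof.
move=> d0.
have H k : (k <= 5)%N -> d ^+ k <= 1 + d ^+ 5.
  move=> k5; case: (lerP d 1) => hd.
  - have : d ^+ k <= 1 by rewrite exprn_ile1.
    have : 0 <= d ^+ 5 by rewrite exprn_ge0.
    lra.
  - have : d ^+ k <= d ^+ 5 by apply: ler_weXn2l => //; exact: ltW.
    lra.
have h1 := H 1%N isT; have h2 := H 2%N isT; have h3 := H 3%N isT.
rewrite expr1 in h1. have h5 : 0 <= d ^+ 5 by rewrite exprn_ge0.
have -> : (1 + d) * (1 + d ^+ 2) = 1 + d + d ^+ 2 + d ^+ 3 by ring.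
lra.
Qed.

Lemma sup_diff (R : realType) (a b : int -> R) (fx c M : R) :
  0 <= fx -> (forall k, b k <= M) -> (forall k, `|a k - fx * b k| <= c) ->
  `|sup [set y | exists k, y = a k] - fx * sup [set y | exists k, y = b k]| <= c.
Proof.
move=> fx0 bM hab.
set SA := [set y | exists k, y = a k]; set SB := [set y | exists k, y = b k].
have habl k : - c <= a k - fx * b k /\ a k - fx * b k <= c.
  by have := hab k; rewrite ler_norml => /andP[].
have SBn : SB !=set0 by exists (b 0); exists 0.
have SAn : SA !=set0 by exists (a 0); exists 0.
have SBu : has_ubound SB by exists M => y [k ->].
have bsup k : b k <= sup SB by apply: ub_le_sup => //; exists k.
have SAu : has_ubound SA.
  exists (fx * M + c) => y [k ->].
  have := habl k; have := ler_wpM2l fx0 (bM k); lra.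
have asup k : a k <= sup SA by apply: ub_le_sup => //; exists k.
have up : sup SA <= fx * sup SB + c.
  apply: ge_sup => // y [k ->].
  have := habl k; have := ler_wpM2l fx0 (bsup k); lra.
have lo : fx * sup SB - c <= sup SA.
  case: (eqVneq fx 0) => [fxe|fxn0].
    have := habl 0; have := asup 0; rewrite fxe !mul0r; lra.
  have fxp : 0 < fx by rewrite lt0r fxn0.
  have : sup SB <= fx^-1 * (sup SA + c).
    apply: ge_sup => // y [k ->].
    rewrite ler_pdivlMl //.
    have := habl k; have := asup k; lra.
  rewrite ler_pdivlMl //; lra.
rewrite ler_norml; apply/andP; split; lra.
Qed.

Lemma tele (R : realType) (f : R -> R) (w Om x y : R) :
  1 <= w -> 0 <= Om -> 0 < x -> 0 < y ->
  (forall t z, 0 < t -> `|ln t| <= 1/w -> 0 < z ->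
     `|f (t * z) - f z| <= Om * ((1 + ln z ^+ 2) * (1 + ln t ^+ 2))) ->
  `|f y - f x| <= 16 * Om * (1 + ln x ^+ 2) * (1 + `|w * (ln y - ln x)| ^+ 5).
Proof.
move=> w1 Om0 x0 y0 step.
have w0 : 0 < w by apply: lt_le_trans w1.
set L := ln y - ln x.
have wL0 : 0 <= w * `|L| by rewrite mulr_ge0 // ltW.
have /andP[tl tu] := trunc_itv wL0.
set N := (Num.trunc (w * `|L|)).+1.
have N0 : 0 < N%:R :> R by rewrite ltr0n.
have Nn0 : N%:R != 0 :> R by rewrite pnatr_eq0.
set h := L / N%:R.
have NhL : N%:R * h = L by rewrite /h mulrC divfK.
have hw : `|h| <= 1 / w.
  rewrite /h normrM normfV normr_nat ler_pdivrMr // mul1r.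
  rewrite ler_pdivlMl //; exact: ltW.
have wi1 : 1 / w <= 1 by rewrite mul1r invf_le1.
have hb : - 1 <= h <= 1.
  rewrite -ler_norml; exact: le_trans hw wi1.
have h1 : h ^+ 2 <= 1 by move: hb => /andP[? ?]; nra.
have a1 : 0 <= 1 + ln x ^+ 2 by rewrite addr_ge0 // sqr_ge0.
have key : forall n : nat, (n <= N)%N ->
    `|f (x * expR (n%:R * h)) - f x| <= n%:R * (4 * Om * (1 + ln x ^+ 2) * (1 + L ^+ 2)).
  elim => [|n IH] nN.
    by rewrite mul0r expR0 mulr1 subrr normr0 mul0r.
  have nN' : (n <= N)%N by apply: ltnW.
  have zpos : 0 < x * expR (n%:R * h) by rewrite mulr_gt0 // expR_gt0.
  have eq1 : x * expR (n.+1%:R * h) = expR h * (x * expR (n%:R * h)).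
    by rewrite -natr1 mulrDl mul1r expRD; ring.
  have st := step (expR h) _ (expR_gt0 h) _ zpos.
  rewrite expRK in st; have {}st := st hw.
  rewrite lnM ?posrE ?expR_gt0 // expRK in st.
  have bnd : (n%:R * h) ^+ 2 <= L ^+ 2.
    have nle : n%:R <= N%:R :> R by rewrite ler_nat.
    have : `|n%:R * h| <= `|L|.
      rewrite -NhL !normrM !normr_nat; apply: ler_wpM2r => //.
    rewrite -(real_normK (num_real (n%:R * h))) -(real_normK (num_real L)).
    move=> hh; have : 0 <= `|n%:R * h| by []. nra.
  have cmb : Om * ((1 + (ln x + n%:R * h) ^+ 2) * (1 + h ^+ 2))
      <= 4 * Om * (1 + ln x ^+ 2) * (1 + L ^+ 2).
    have : (1 + (ln x + n%:R * h) ^+ 2) * (1 + h ^+ 2)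
        <= 4 * ((1 + ln x ^+ 2) * (1 + L ^+ 2)).
      move: (ln x) (n%:R * h) bnd => a b bnd.
      have e0 : 0 <= (a + b) ^+ 2 by rewrite sqr_ge0.
      have e1 : (1 + (a + b) ^+ 2) * (1 + h ^+ 2) <= 2 * (1 + (a + b) ^+ 2) by nra.
      have e2 : (a + b) ^+ 2 <= 2 * a ^+ 2 + 2 * b ^+ 2.
        have : 0 <= (a - b) ^+ 2 by rewrite sqr_ge0.
        nra.
      have e3 : 0 <= a ^+ 2 * L ^+ 2 by rewrite mulr_ge0 // sqr_ge0.
      nra.
    move=> H; have := ler_wpM2l Om0 H.
    by rewrite !mulrA [Om * 4]mulrC.
  rewrite eq1.
  have tri := ler_distD (f (x * expR (n%:R * h))) (f (expR h * (x * expR (n%:R * h)))) (f x).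
  have := IH nN'.
  rewrite -natr1 mulrDl mul1r.
  lra.
have := key N (leqnn N).
rewrite NhL.
have -> : x * expR L = y.
  rewrite /L expRD expRN lnK ?posrE // lnK ?posrE //.
  by rewrite mulrC divfK // gt_eqF.
move=> H; apply: (le_trans H).
set d := `|w * L|.
have dE : d = w * `|L| by rewrite /d normrM ger0_norm // ltW.
have d0 : 0 <= d by exact: normr_ge0.
have Nd : N%:R <= 1 + d :> R by rewrite dE /N -natr1; lra.
have Ld : L ^+ 2 <= d ^+ 2.
  have : `|L| <= d by rewrite dE ler_peMl.
  rewrite -(real_normK (num_real L)) => hh.
  have : 0 <= `|L| by []. nra.
have dp := @dpow_le R d d0.
have : N%:R * (1 + L ^+ 2) <= 4 * (1 + d ^+ 5).
  apply: le_trans dp; apply: ler_pM; [exact: ler0n | by rewrite addr_ge0 // sqr_ge0 | lra | lra].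
move=> HH.
have K0 : 0 <= 4 * Om * (1 + ln x ^+ 2) by rewrite mulr_ge0 // mulr_ge0.
have := ler_wpM2l K0 HH.
set P := 1 + ln x ^+ 2.
have -> : 4 * Om * P * (N%:R * (1 + L ^+ 2)) = N%:R * (4 * Om * P * (1 + L ^+ 2)) by ring.
have -> : 4 * Om * P * (4 * (1 + d ^+ 5)) = 16 * Om * P * (1 + d ^+ 5) by ring.
by [].
Qed.

Lemma core (R : realType) (chi f : R -> R) (w Om A B eta M x : R) :
 1 <= w -> 0 <= Om -> 0 < eta -> 0 < x ->
 (forall z, 0 < z -> 0 <= f z) ->
 (forall z, 0 < z -> `|chi z| <= M) ->
 (forall z, 1 <= z <= expR 1 -> eta <= chi z) ->
 (forall (u : R) (k : int), 0 < u -> `|chi (expR (- k%:~R) * u)| * `|k%:~R - ln u| ^+ 0 <= A) ->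
 (forall (u : R) (k : int), 0 < u -> `|chi (expR (- k%:~R) * u)| * `|k%:~R - ln u| ^+ 5 <= B) ->
 (forall t z, 0 < t -> `|ln t| <= 1/w -> 0 < z ->
     `|f (t * z) - f z| <= Om * ((1 + ln z ^+ 2) * (1 + ln t ^+ 2))) ->
 `|MG chi w f x - f x| <= 64 * (1 + ln x ^+ 2) / eta * Om * (A + B).
Proof.
move=> w1 Om0 eta0 x0 fpos chiM chieta hA hB step.
have w0 : 0 < w by apply: lt_le_trans w1.
rewrite /MG.
set u := x `^ w.
have u0 : 0 < u by apply: powR_gt0.
have lnu : ln u = w * ln x by rewrite /u ln_powR.
have A0 : 0 <= A.
  apply: le_trans (hA u 0 u0); rewrite expr0 mulr1; exact: normr_ge0.
have B0 : 0 <= B.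
  apply: le_trans (hB u 0 u0); rewrite mulr_ge0 // exprn_ge0 //.
have a1 : 0 <= 1 + ln x ^+ 2 by rewrite addr_ge0 // sqr_ge0.
pose c := 16 * Om * (1 + ln x ^+ 2) * (A + B).
have hk : forall k : int,
    `|chi (expR (- k%:~R) * u) * f (expR (k%:~R / w)) - f x * chi (expR (- k%:~R) * u)| <= c.
  move=> k.
  have -> : chi (expR (- k%:~R) * u) * f (expR (k%:~R / w)) - f x * chi (expR (- k%:~R) * u)
      = chi (expR (- k%:~R) * u) * (f (expR (k%:~R / w)) - f x) by ring.
  rewrite normrM.
  have yk : 0 < expR (k%:~R / w) by apply: expR_gt0.
  have T := @tele R f w Om x _ w1 Om0 x0 yk step.
  rewrite expRK in T.
  have dE : w * (k%:~R / w - ln x) = k%:~R - ln u.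
    by rewrite lnu mulrBr [w * (_ / w)]mulrC divfK // gt_eqF.
  rewrite dE in T.
  have hA' := hA u k u0; have hB' := hB u k u0.
  rewrite expr0 mulr1 in hA'.
  apply: le_trans (ler_wpM2l (normr_ge0 _) T) _.
  have K0 : 0 <= 16 * Om * (1 + ln x ^+ 2) by rewrite mulr_ge0 // mulr_ge0.
  have := ler_wpM2l K0 (lerD hA' hB').
  move=> H; rewrite /c; apply: (le_trans _ H); rewrite le_eqVlt; apply/orP; left; apply/eqP; ring.
have bM : forall k : int, chi (expR (- k%:~R) * u) <= M.
  move=> k; apply: le_trans (ler_norm _) (chiM _ _).
  by rewrite mulr_gt0 // expR_gt0.
have SD := @sup_diff R (fun k => chi (expR (- k%:~R) * u) * f (expR (k%:~R / w)))
   (fun k => chi (expR (- k%:~R) * u)) (f x) c M (fpos x x0) bM hk.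
simpl in SD.
set Nn := sup [set y : R | exists k : int, y = chi (expR (- k%:~R) * u) * f (expR (k%:~R / w))] in SD *.
set Dd := sup [set y : R | exists k : int, y = chi (expR (- k%:~R) * u)] in SD *.
have Dge : eta <= Dd.
  pose k0 := Num.floor (ln u).
  have /andP[fl fu] := floor_itv (ln u).
  have arg : expR (- k0%:~R) * u = expR (ln u - k0%:~R).
    by rewrite addrC expRD lnK // posrE.
  have : 1 <= expR (- k0%:~R) * u <= expR 1.
    rewrite arg -[X in X <= _ <= _]expR0 !ler_expR; apply/andP; split.
      by rewrite subr_ge0.
    by move: fu; rewrite intrD; lra.
  move/chieta => H; apply: le_trans H _.
  apply: ub_le_sup; last by exists k0.
  by exists M => y [k ->].
have Dd0 : 0 < Dd by apply: lt_le_trans Dge.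
have -> : Nn / Dd - f x = (Nn - f x * Dd) / Dd.
  by field; rewrite gt_eqF.
rewrite normrM normfV (gtr0_norm Dd0).
apply: (@le_trans _ _ (c * eta^-1)).
  apply: ler_pM => //; first by rewrite invr_ge0 ltW.
  by rewrite lef_pV2 ?posrE.
have P0 : 0 <= Om * (1 + ln x ^+ 2) * (A + B) * eta^-1.
  by rewrite !mulr_ge0 // ?addr_ge0 // invr_ge0 ltW.
have -> : c * eta^-1 = 16 * (Om * (1 + ln x ^+ 2) * (A + B) * eta^-1) by rewrite /c; ring.
have -> : 64 * (1 + ln x ^+ 2) / eta * Om * (A + B) = 64 * (Om * (1 + ln x ^+ 2) * (A + B) * eta^-1) by ring.
lra.
Qed.

Lemma fin_ge0 (R : realType) (e : \bar R) : (0 <= e)%E -> (e < +oo)%E ->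
  exists r : R, 0 <= r /\ e = r%:E.
Proof. by case: e => [r| |] //= r0 _; exists r; split. Qed.

Theorem theorem3p4 (R : realType) (chi : R -> R) :
  is_kernel chi -> 0 < eta_of chi -> (moment chi 5 < +oo)%E ->
  forall (f : R -> R) (w : R), UBplus f -> 1 <= w ->
    (wnorm (fun x => (MG chi w f x - f x)%R)
       <= (64 / eta_of chi)%:E * Omega f (1 / w) * (moment chi 0 + moment chi 5))%E /\
    (forall x : R, 0 < x ->
      ((`|MG chi w f x - f x|%R)%:E
        <= (64 * (1 + ln x ^+ 2) / eta_of chi)%:E * Omega f (1 / w)
              * (moment chi 0 + moment chi 5))%E).
Proof.
move=> [_ [M chiM]] eta0 m5fin f w [fpos _] w1.
have w0 : 0 < w by apply: lt_le_trans w1.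
have chieta : forall z, 1 <= z <= expR 1 -> eta_of chi <= chi z.
  move=> z hz; rewrite /eta_of.
  have lb : has_lbound [set y : R | exists x : R, 1 <= x <= expR 1 /\ y = chi x].
    exists (- M) => y [z' [/andP[hz1 _] ->]].
    have z'0 : 0 < z' by apply: lt_le_trans hz1.
    by have := chiM z' z'0; rewrite ler_norml => /andP[].
  by apply: (ge_inf lb); exists z.
have mem : forall nu (u : R) (k : int), 0 < u ->
    ((`|chi (expR (- k%:~R) * u)| * `|k%:~R - ln u| ^+ nu)%:E <= moment chi nu)%E.
  by move=> nu u k u0; apply: ereal_sup_ubound; exists u, k.
have mge0 : forall nu, (0 <= moment chi nu)%E.
  move=> nu; apply: le_trans (mem nu 1 0 ltr01).
  by rewrite lee_fin mulr_ge0 // exprn_ge0.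
have m0le : (moment chi 0 <= M%:E)%E.
  apply: ge_ereal_sup => y [u [k [u0 ->]]].
  rewrite lee_fin expr0 mulr1; apply: chiM.
  by rewrite mulr_gt0 // expR_gt0.
have [A [A0 Ae]] := @fin_ge0 R _ (mge0 0%N) (le_lt_trans m0le (ltry _)).
have [B [B0 Be]] := @fin_ge0 R _ (mge0 5%N) m5fin.
have hA : forall (u : R) (k : int), 0 < u -> `|chi (expR (- k%:~R) * u)| * `|k%:~R - ln u| ^+ 0 <= A.
  by move=> u k u0; rewrite -lee_fin -Ae; apply: mem.
have hB : forall (u : R) (k : int), 0 < u -> `|chi (expR (- k%:~R) * u)| * `|k%:~R - ln u| ^+ 5 <= B.
  by move=> u k u0; rewrite -lee_fin -Be; apply: mem.
have Apos : 0 < A.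
  apply: lt_le_trans (hA 1 0 ltr01).
  rewrite expr0 mulr1 oppr0 expR0 mulr1.
  apply: lt_le_trans eta0 _; apply: le_trans (ler_norm _).
  apply: chieta; rewrite lexx /= -[X in X <= _]expR0 ler_expR; exact: ler01.
have Oelem : forall t x : R, 0 < t -> `|ln t| <= 1 / w -> 0 < x ->
    ((`|f (t * x) - f x| / ((1 + ln x ^+ 2) * (1 + ln t ^+ 2)))%:E <= Omega f (1 / w))%E.
  move=> t x t0 ht x0; apply: ereal_sup_ubound; exists t, x; split => //.
have den0 : forall t x : R, 0 < (1 + ln x ^+ 2) * (1 + ln t ^+ 2).
  move=> t x; apply: mulr_gt0; apply: ltr_pwDl => //; exact: sqr_ge0.
have O0 : (0 <= Omega f (1 / w))%E.
  apply: le_trans (Oelem 1 1 ltr01 _ ltr01).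
    by rewrite lee_fin divr_ge0 // ltW.
  by rewrite ln1 normr0 mul1r invr_ge0 ltW.
rewrite Ae Be -EFinD.
case E : (Omega f (1 / w)) => [r| |]; rewrite E in O0 Oelem => //.
- rewrite lee_fin in O0.
  have step : forall t z : R, 0 < t -> `|ln t| <= 1 / w -> 0 < z ->
      `|f (t * z) - f z| <= r * ((1 + ln z ^+ 2) * (1 + ln t ^+ 2)).
    move=> t z t0 ht z0; have := Oelem t z t0 ht z0.
    by rewrite lee_fin ler_pdivrMr.
  have C : forall x, 0 < x ->
      `|MG chi w f x - f x| <= 64 * (1 + ln x ^+ 2) / eta_of chi * r * (A + B).
    move=> x x0; apply: (@core R chi f w r A B (eta_of chi) M x) => //.
  split.
    apply: ge_ereal_sup => y [x [x0 ->]].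
    rewrite -!EFinM lee_fin.
    have a1 : 0 < 1 + ln x ^+ 2 by apply: ltr_pwDl => //; exact: sqr_ge0.
    have om0 : 0 <= omega_bar x by rewrite /omega_bar divr_ge0 // ltW.
    apply: le_trans (ler_wpM2l om0 (C x x0)) _.
    rewrite le_eqVlt; apply/orP; left; apply/eqP.
    rewrite /omega_bar; field.
    by apply/andP; split; rewrite gt_eqF.
  move=> x x0; rewrite -!EFinM lee_fin; exact: C.
- have ApB : (0 < (A + B)%:E)%E by rewrite lte_fin ltr_pwDl.
  split.
    rewrite gt0_muley ?gt0_mulye ?leey // lte_fin divr_gt0 //.
  move=> x x0; rewrite gt0_muley ?gt0_mulye ?leey // lte_fin !divr_gt0 // mulr_gt0 //.
  by apply: ltr_pwDl => //; exact: sqr_ge0.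
Qed.
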